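(* Let $X$ be an $n$-dimensional non-singular tropical hypersurface in a (non-singular) tropical toric variety $Y$. For a face $\sigma$ of $X$ of dimension $q$ and sedentarity $\operatorname{sed}(\sigma)$, we have $\mathcal{N}_p(\sigma)=0$ whenever $p\le n-q-\operatorname{sed}(\sigma)$.
   Context: A non-singular tropical toric variety $Y$ of dimension $n+1$ is the tropical toric variety associated to a simplicial unimodular rational polyhedral fan $\Sigma$ in $\mathbb{R}^{n+1}$; it is the disjoint union of strata $Y_\rho\cong\mathbb{R}^{n+1-\dim\rho}$, $\rho\in\Sigma$. The sedentarity of a point is the codimension in $Y$ of the stratum containing it, and $\operatorname{sed}(\sigma)$ is that of the relative interior points of $\sigma$. For $\rho$ with primitive ray generators $r_1,\dots,r_s$, $T_{\mathbb Z}(Y_\rho)=\mathbb{Z}^{n+1}/\langle r_1,\dots,r_s\rangle$, with quotient maps $\pi_{\rho\eta}$ for $\rho\subset\eta$; $T_{\mathbb Z}(\sigma)$ is the integer tangent lattice of a rational polyhedron $\sigma$ inside $T_{\mathbb Z}(Y_\rho)$ where $\operatorname{relint}\sigma\subset Y_\rho$. A tropical hypersurface $X$ in $Y$ is the closure of a tropical hypersurface in $Y_0=\mathbb{R}^{n+1}$ defined by a tropical polynomial, with the polyhedral structure dual to the induced regular subdivision of its Newton polytope; $X$ is non-singular if each $X\cap Y_\rho$ is a tropical hypersurface in $Y_\rho$ dual to a primitive regular triangulation of its Newton polytope. For a face $\tau$ of $X$ with relative interior in $Y_\rho$: $\mathcal{F}^X_p(\tau)=\sum_\sigma\bigwedge^pT_{\mathbb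 Z}(\sigma)$ over faces $\sigma\supseteq\tau$ of $X$ with relative interior in $Y_\rho$, and $\mathcal{F}^Y_p|_X(\tau)=\bigwedge^pT_{\mathbb Z}(Y_\rho)$. $\mathcal{N}_p$ is the cokernel cosheaf on $X$ of the natural inclusion $\mathcal{F}^X_p\to\mathcal{F}^Y_p|_X$, i.e. $\mathcal{N}_p(\tau)=\bigwedge^pT_{\mathbb Z}(Y_\rho)/\mathcal{F}^X_p(\tau)$. *)

(* Defs.v *)
From HB Require Import structures.
From mathcomp Require Import all_boot all_order all_algebra.
From mathcomp Require Import finmap.
From mathcomp Require Import reals.

Set Implicit Arguments.
Unset Strict Implicit.
Unset Printing Implicit Defensive.

Import Order.TTheory GRing.Theory Num.Theory.
Local Open Scope ring_scope.


Section TropDefs.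
Variables (R : realType) (N : nat).

Definition ivec := {ffun 'I_N -> int}.
(* real points of R^N = Y_0 (also used as lifts of points of strata Y_rho) *)
Definition rvec := 'I_N -> R.

Definition idot (u v : ivec) : int := \sum_j u j * v j.

Definition zcomb (B : seq ivec) (c : nat -> int) : ivec :=
  [ffun j => \sum_(i < size B) c i * (nth [ffun=> 0] B i) j].

Definition in_Zspan (B : seq ivec) (v : ivec) : Prop :=
  exists c : nat -> int, v = zcomb B c.

Definition is_Zbasis (L : ivec -> Prop) (B : seq ivec) : Prop :=
  [/\ forall b, b \in B -> L b,
      forall v, L v -> in_Zspan B v &
      forall c : nat -> int, zcomb B c = [ffun=> 0] ->
        forall i, (i < size B)%N -> c i = 0].

Definition part_of_Zbasis (L : ivec -> Prop) (B : seq ivec) : Prop :=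
  exists B' : seq ivec, is_Zbasis L (B ++ B').

(* a simplicial cone is given by the finite set of its primitive ray generators *)
Definition cone_pts (rho : {fset ivec}) (x : rvec) : Prop :=
  exists lam : ivec -> R, (forall r, 0 <= lam r) /\
    x = (fun j => \sum_(r <- enum_fset rho) lam r * ((r j)%:~R)).

Definition unimodular_fan (Sig : {fset {fset ivec}}) : Prop :=
  [/\ fset0 \in Sig,
      forall rho tau, rho \in Sig -> (tau `<=` rho)%fset -> tau \in Sig,
      forall rho, rho \in Sig -> part_of_Zbasis (fun _ => True) (enum_fset rho) &
      forall rho eta, rho \in Sig -> eta \in Sig ->
        forall x, (cone_pts rho x /\ cone_pts eta x) <-> cone_pts (rho `&` eta)%fset x].

Record trop_poly := TropPoly {
  tp_k : nat;
  tp_e : 'I_tp_k -> ivec;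
  tp_c : 'I_tp_k -> R }.

Definition mono (g : trop_poly) (i : 'I_(tp_k g)) (x : rvec) : R :=
  tp_c i + \sum_j ((tp_e i j)%:~R * x j).
Arguments mono g i x : clear implicits.

Definition argmax (g : trop_poly) (x : rvec) : {set 'I_(tp_k g)} :=
  [set i | [forall j, mono g j x <= mono g i x]].

Definition trop_hyp (g : trop_poly) (x : rvec) : Prop := (1 < #|argmax g x|)%N.

Definition is_trop_poly (g : trop_poly) : Prop :=
  (0 < tp_k g)%N /\ injective (@tp_e g).

(* M_rho : the lattice of monomials on the stratum Y_rho (dual of T_Z(Y_rho)) *)
Definition M_lat (rho : {fset ivec}) (m : ivec) : Prop :=
  forall r, r \in rho -> idot m r = 0.

(* a tropical polynomial on Y_rho; points of Y_rho are represented by their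
   lifts to R^N (the value of a monomial of M_rho does not depend on the lift) *)
Definition trop_poly_on (rho : {fset ivec}) (g : trop_poly) : Prop :=
  is_trop_poly g /\ forall i : 'I_(tp_k g), M_lat rho (tp_e i).

(* the induced regular subdivision of the Newton polytope of g has cells
   conv{e_i : i in argmax g x}; it is a primitive triangulation iff every
   cell is a simplex whose edge vectors from a vertex are part of a basis of
   the lattice M_rho *)
Definition primitive_triangulation (rho : {fset ivec}) (g : trop_poly) : Prop :=
  forall x i0, i0 \in argmax g x ->
    part_of_Zbasis (M_lat rho)
      [seq [ffun j => tp_e i j - tp_e i0 j] | i <- enum (argmax g x :\ i0)].

(* the closure in Y of V(f) ⊂ Y_0, intersected with the stratum Y_rho, as a set
   of lifts x in R^N: x + d + sum_r t_r r lies in V(f) with |d| small and all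
   t_r large (points of Y_rho are limits of x + sum_r t_r r, t_r -> +oo) *)
Definition closure_in_stratum (f : trop_poly) (rho : {fset ivec}) (x : rvec) : Prop :=
  forall (eps M : R), 0 < eps ->
    exists (d : rvec) (t : ivec -> R),
      [/\ forall j, `|d j| < eps,
          forall r, r \in rho -> M < t r &
          trop_hyp f (fun j => x j + d j +
                        \sum_(r <- enum_fset rho) t r * ((r j)%:~R))].

(* face of V(g) dual to the cell with vertex set S (lifted to R^N) *)
Definition face (g : trop_poly) (S : {set 'I_(tp_k g)}) (x : rvec) : Prop :=
  S \subset argmax g x.
Arguments face g S x : clear implicits.

(* the face sets of V(g): duals of cells of positive dimension *)
Definition is_face (g : trop_poly) (P : rvec -> Prop) : Prop :=
  exists x0, (1 < #|argmax g x0|)%N /\ P = face g (argmax g x0).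

Definition in_tangent (P : rvec -> Prop) (v : rvec) : Prop :=
  exists (k : nat) (c : 'I_k -> R) (x y : 'I_k -> rvec),
    (forall i, P (x i) /\ P (y i)) /\
    v = (fun j => \sum_i c i * (x i j - y i j)).

Definition lin_indep (k : nat) (v : 'I_k -> rvec) : Prop :=
  forall c : 'I_k -> R, (forall j, \sum_i c i * v i j = 0) -> forall i, c i = 0.

Definition has_dim (P : rvec -> Prop) (d : nat) : Prop :=
  (exists v : 'I_d -> rvec, (forall i, in_tangent P (v i)) /\ lin_indep v) /\
  (forall v : 'I_d.+1 -> rvec, (forall i, in_tangent P (v i)) -> ~ lin_indep v).

Definition tangent_int (P : rvec -> Prop) (v : ivec) : Prop :=
  in_tangent P (fun j => (v j)%:~R).

End TropDefs.

(* an element of /\^p Z^N is given by its coordinates on the basis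
   e_I = e_{i_1} /\ ... /\ e_{i_p}, I = {i_1 < ... < i_p} *)
Definition wedge (n : nat) (p : nat) (vs : 'I_p -> ivec n.+1)
    (I : {set 'I_n.+1}) : int :=
  if #|I| == p then \det (\matrix_(i < p, j < p) vs i (nth ord0 (enum I) j))
  else 0.

Definition basis_wedge (n : nat) (I : {set 'I_n.+1}) (J : {set 'I_n.+1}) : int :=
  (J == I)%:Z.

Definition in_Zspan_ext (n : nat) (G : ({set 'I_n.+1} -> int) -> Prop)
    (w : {set 'I_n.+1} -> int) : Prop :=
  exists (k : nat) (c : 'I_k -> int) (ws : 'I_k -> ({set 'I_n.+1} -> int)),
    (forall i, G (ws i)) /\ forall J, w J = \sum_i c i * ws i J.

(* N_p(sigma) = 0 for a face sigma (lifted to R^N) of V(g) ⊂ Y_rho.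
   /\^p T_Z(Y_rho) = /\^p (Z^N / L) = /\^p Z^N / (L /\ /\^{p-1} Z^N), where
   L = <rays of rho>; the image of /\^p T_Z(sigma') is spanned by wedges of
   p vectors of the lifted lattice T_Z(sigma') ⊂ Z^N.  So N_p(sigma) = 0 iff
   every e_I is an integer combination of such wedges (sigma' ⊇ sigma a face
   of X in Y_rho) and of wedges having one factor in L. *)
Definition N_vanishes (R : realType) (n : nat) (rho : {fset ivec n.+1})
    (g : trop_poly R n.+1) (sigma : rvec R n.+1 -> Prop) (p : nat) : Prop :=
  forall I : {set 'I_n.+1}, #|I| = p ->
    in_Zspan_ext
      (fun w => exists vs : 'I_p -> ivec n.+1,
         w = wedge vs /\
         ((exists sigma', is_face g sigma' /\ (forall x, sigma x -> sigma' x) /\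
              forall i, tangent_int sigma' (vs i))
          \/ (exists i, in_Zspan (enum_fset rho) (vs i))))
      (basis_wedge I).

(* Main.v *)
Require Import Defs.
From HB Require Import structures.
From mathcomp Require Import all_boot all_order all_algebra.
From mathcomp Require Import finmap.
From mathcomp Require Import reals.
From mathcomp Require Import perm lra zify.
From Stdlib Require Import FunctionalExtensionality.
Set Implicit Arguments. Unset Strict Implicit. Unset Printing Implicit Defensive.
Import Order.TTheory GRing.Theory Num.Theory.
Local Open Scope ring_scope.


Section Alg.
Variable N : nat.
Local Notation iv := (ivec N).
Local Notation z0 := ([ffun=> 0] : iv).

Lemma sum_delta (n l : nat) (F : nat -> int) : (l < n)%N ->
  \sum_(i < n) (i == l :> nat)%:Z * F i = F l.
Proof.
move=> hl; rewrite (bigD1 (Ordinal hl)) //= eqxx mul1r big1 ?addr0 //.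
move=> i hi; rewrite (_ : (i == l :> nat) = false) ?mul0r //.
by apply/negbTE; apply: contra hi => /eqP e; apply/eqP/val_inj.
Qed.

Lemma sum_delta' (n l : nat) (F : nat -> int) : (l < n)%N ->
  \sum_(i < n) F i * (i == l :> nat)%:Z = F l.
Proof. by move=> hl; rewrite -(sum_delta F hl); apply: eq_bigr => i _; rewrite mulrC. Qed.

Lemma zcomb_delta (B : seq iv) l : (l < size B)%N ->
  zcomb B (fun i => (i == l)%:Z) = nth z0 B l.
Proof. by move=> hl; apply/ffunP => j; rewrite ffunE (sum_delta (fun i => nth z0 B i j)). Qed.

Lemma zcomb_uniq L (B : seq iv) c c' : is_Zbasis L B -> zcomb B c = zcomb B c' ->
  forall i, (i < size B)%N -> c i = c' i.
Proof.
case=> _ _ hind e i hi; apply/eqP; rewrite -subr_eq0; apply/eqP.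
apply: (hind (fun i => c i - c' i)) => //; apply/ffunP => j.
move/ffunP: e => /(_ j); rewrite !ffunE => e.
rewrite (eq_bigr (fun i : 'I_(size B) => c i * nth z0 B i j - c' i * nth z0 B i j)).
  by rewrite sumrB e subrr.
by move=> k _; rewrite mulrBl.
Qed.

Lemma idot_zcomb (m : iv) B c :
  idot m (zcomb B c) = \sum_(i < size B) c i * idot m (nth z0 B i).
Proof.
rewrite /idot; under eq_bigr => j _ do rewrite ffunE mulr_sumr.
rewrite exchange_big; apply: eq_bigr => i _; rewrite mulr_sumr.
by apply: eq_bigr => j _; rewrite mulrCA.
Qed.

Definition evec (j : 'I_N) : iv := [ffun j' => (j == j')%:Z].

Lemma idot_evec (m : iv) j : idot m (evec j) = m j.
Proof.
rewrite /idot (bigD1 j) //= ffunE eqxx mulr1 big1 ?addr0 //.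
by move=> i hi; rewrite ffunE eq_sym (negbTE hi) mulr0.
Qed.

Lemma dual_vectors (rho : {fset iv}) (E B' B'' : seq iv) :
  is_Zbasis (fun _ => True) (enum_fset rho ++ B'') ->
  is_Zbasis (M_lat rho) (E ++ B') ->
  exists w : nat -> iv, forall a b, (a < size E)%N -> (b < size E)%N ->
    idot (nth z0 E a) (w b) = (a == b)%:Z.
Proof.
set BZ := enum_fset rho ++ B''; set F := E ++ B'.
move=> hZ hM.
have: forall j : 'I_N, exists c, evec j = zcomb BZ c.
  by move=> j; case: hZ => _ h _; apply: h.
case/fin_all_exists => cc hcc.
pose y (i : nat) : iv := [ffun j => cc j i].
have recon : forall x : iv, x = zcomb BZ (fun i => idot (y i) x).
  move=> x; apply/ffunP => j'; rewrite ffunE.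
  under eq_bigr => i _ do rewrite /idot big_distrl /=.
  rewrite exchange_big /=.
  transitivity (\sum_(j < N) x j * evec j j').
    by rewrite /evec (bigD1 j') //= ffunE eqxx mulr1 big1 ?addr0 //;
      move=> i hi; rewrite ffunE (negbTE hi) mulr0.
  apply: eq_bigr => j _; rewrite hcc ffunE mulr_sumr; apply: eq_bigr => i _.
  by rewrite ffunE mulrA [x j * _]mulrC.
have dual : forall i l, (i < size BZ)%N -> (l < size BZ)%N ->
    idot (y i) (nth z0 BZ l) = (i == l)%:Z.
  move=> i l hi hl.
  have := zcomb_uniq hZ (etrans (esym (recon (nth z0 BZ l))) (esym (zcomb_delta hl))).
  by move=> /(_ i hi).
have inrho : forall l, (l < size (enum_fset rho))%N -> nth z0 BZ l \in rho.
  by move=> l hl; rewrite /BZ nth_cat hl; exact: mem_nth.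
have yM : forall i, (size (enum_fset rho) <= i < size BZ)%N -> M_lat rho (y i).
  move=> i /andP [hi1 hi2] r hr.
  have hr' : r \in enum_fset rho by [].
  have hl : (index r (enum_fset rho) < size (enum_fset rho))%N by rewrite index_mem.
  have -> : r = nth z0 BZ (index r (enum_fset rho)) by rewrite /BZ nth_cat hl nth_index.
  rewrite dual //; last by apply: leq_trans hl _; rewrite /BZ size_cat leq_addr.
  by case: eqP => // e; move: hi1; rewrite e leqNgt hl.
have expand : forall m : iv, M_lat rho m -> forall j,
    m j = \sum_(i < size BZ) idot m (nth z0 BZ i) * y i j.
  move=> m hm j; rewrite -idot_evec {1}(recon (evec j)) idot_zcomb.
  by apply: eq_bigr => i _; rewrite idot_evec mulrC ffunE.
have: forall i : 'I_(size BZ), exists c, (size (enum_fset rho) <= i)%N -> y i = zcomb F c.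
  move=> i; case: (leqP (size (enum_fset rho)) i) => h.
    case: hM => _ hsp _; case: (hsp (y i)) => [|c hc]; last by exists c.
    by apply: yM; rewrite h ltn_ord.
  by exists (fun _ => 0).
case/fin_all_exists => cf hcf.
exists (fun b => [ffun j => \sum_(i < size BZ) cf i b * nth z0 BZ i j]).
move=> a b ha hb.
have haF : (a < size F)%N by rewrite /F size_cat ltn_addr.
have hbF : (b < size F)%N by rewrite /F size_cat ltn_addr.
have EaF : nth z0 E a = nth z0 F a by rewrite /F nth_cat ha.
have EaM : M_lat rho (nth z0 E a).
  by rewrite EaF; case: hM => h _ _; apply: h; exact: mem_nth.
have key : zcomb F (fun c => \sum_(i < size BZ) idot (nth z0 E a) (nth z0 BZ i) * cf i c)
           = zcomb F (fun i => (i == a)%:Z).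
  rewrite zcomb_delta // -EaF; apply/ffunP => j; rewrite ffunE (expand _ EaM j).
  under eq_bigr => c _ do rewrite big_distrl /=.
  rewrite exchange_big /=; apply: eq_bigr => i _.
  case: (leqP (size (enum_fset rho)) i) => h.
    rewrite (hcf i h) ffunE mulr_sumr; apply: eq_bigr => c _; by rewrite mulrA.
  have -> : idot (nth z0 E a) (nth z0 BZ i) = 0 by apply: EaM; apply: inrho.
  by rewrite mul0r big1 // => c _; rewrite !mul0r.
have := zcomb_uniq hM key hbF; rewrite eq_sym => <-.
rewrite /idot; under eq_bigr => j _ do rewrite ffunE mulr_sumr.
rewrite exchange_big; apply: eq_bigr => i _ /=; rewrite /idot mulr_suml.
by apply: eq_bigr => j _; rewrite mulrCA mulrC.
Qed.

End Alg.


Lemma span_sum n (G : ({set 'I_n.+1} -> int) -> Prop) (T : finType)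
  (c : T -> int) (ws : T -> {set 'I_n.+1} -> int) :
  (forall x, G (ws x)) -> in_Zspan_ext G (fun J => \sum_x c x * ws x J).
Proof.
move=> hG; exists #|T|, (fun i => c (enum_val i)), (fun i => ws (enum_val i)).
split=> // J.
rewrite -(big_enum_val (A := T) (fun x => c x * ws x J)).
by apply: eq_bigl => x; rewrite inE.
Qed.

Lemma wedge_expand n p K (A : 'I_p -> 'I_K -> int) (W : 'I_K -> ivec n.+1) J :
  wedge (fun t => [ffun j => \sum_u A t u * W u j]) J =
  \sum_(f : {ffun 'I_p -> 'I_K}) (\prod_t A t (f t)) * wedge (fun t => W (f t)) J.
Proof.
rewrite /wedge; case: eqP => _; last by rewrite big1 // => f _; rewrite mulr0.
rewrite /determinant.
transitivity (\sum_(s : {perm 'I_p}) \sum_(f : {ffun 'I_p -> 'I_K}) (-1) ^+ s *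
   ((\prod_t A t (f t)) * \prod_t W (f t) (nth ord0 (enum J) (s t)))).
  apply: eq_bigr => s _; rewrite -mulr_sumr; congr (_ * _).
  under eq_bigr => t _ do rewrite mxE ffunE.
  by rewrite bigA_distr_bigA; apply: eq_bigr => f _; rewrite big_split.
rewrite exchange_big; apply: eq_bigr => f _; rewrite mulr_sumr.
apply: eq_bigr => s _; rewrite mulrCA; congr (_ * (_ * _)).
by apply: eq_bigr => t _; rewrite mxE.
Qed.


Lemma basis_wedge_evec n p (I : {set 'I_n.+1}) : #|I| = p -> forall J,
  basis_wedge I J =
  wedge (fun t : 'I_p => [ffun j' => (nth ord0 (enum I) t == j')%:Z]) J.
Proof.
move=> hI J; rewrite /wedge /basis_wedge.
have szI : size (enum I) = p by rewrite -cardE.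
case: (#|J| =P p) => hJ; last first.
  by case: (J =P I) => // e; case: hJ; rewrite e.
have szJ : size (enum J) = p by rewrite -cardE.
case: (J =P I) => [-> | hne].
  rewrite (_ : \matrix_(i, j) _ = 1%:M) ?det1 //.
  apply/matrixP => t s; rewrite !mxE ffunE.
  rewrite nth_uniq ?enum_uniq ?szI //.
  have -> : (t == s) = (val t == val s) by [].
  by case: (val t == val s).
have [t ht] : exists t : 'I_p, nth ord0 (enum I) t \notin J.
  case: (boolP [exists t : 'I_p, nth ord0 (enum I) t \notin J]) => [/existsP // | /existsPn H].
  exfalso; apply: hne.
  apply/eqP; rewrite eq_sym eqEcard hJ hI leqnn andbT; apply/subsetP => x hx.
  have hxe : x \in enum I by rewrite mem_enum.
  have hix : (index x (enum I) < p)%N by rewrite -szI index_mem.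
  have := H (Ordinal hix); rewrite /= nth_index //; by move/negbNE.
rewrite /determinant big1 // => s _.
rewrite (bigD1 t) //= mxE ffunE.
rewrite (_ : (nth ord0 (enum I) t == nth ord0 (enum J) (s t)) = false) ?mul0r ?mulr0 //.
apply/negbTE; apply: contra ht => /eqP ->.
by rewrite -mem_enum mem_nth // szJ.
Qed.


Section Geo.
Variables (R : realType) (N : nat) (g : trop_poly R N).

Definition Dv (i : 'I_(tp_k g)) (v : rvec R N) : R := \sum_j (tp_e i j)%:~R * v j.

Lemma mono_shift i x e d :
  @mono R N g i (fun j => x j + e * d j) = @mono R N g i x + e * Dv i d.
Proof.
rewrite /mono /Dv -addrA; congr (_ + _).
rewrite mulr_sumr -big_split /=; apply: eq_bigr => j _; lra.
Qed.

Lemma small_eps (I : finType) (P : pred I) (a gp : I -> R) :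
  (forall i, P i -> 0 < gp i) -> exists2 e : R, 0 < e & forall i, P i -> e * a i < gp i.
Proof.
move=> hgp; set S := \sum_(i | P i) `|a i| / gp i.
have S0 : 0 <= S by apply: sumr_ge0 => i hi; rewrite divr_ge0 // ltW // hgp.
exists (1 + S)^-1; first by rewrite invr_gt0; lra.
move=> i hi; have gi := hgp i hi.
have hle : `|a i| / gp i <= S.
  rewrite /S (bigD1 i) //= lerDl; apply: sumr_ge0 => j /andP [hj _].
  by rewrite divr_ge0 // ltW // hgp.
have hle' : `|a i| <= S * gp i by rewrite -ler_pdivrMr.
apply: (le_lt_trans (y := (1 + S)^-1 * `|a i|)).
  by rewrite ler_pM2l ?invr_gt0 ?real_ler_norm ?num_real //; lra.
rewrite mulrC ltr_pdivrMr; last lra.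
nra.
Qed.

Lemma argmaxE x i : (i \in argmax g x) = [forall j, @mono R N g j x <= @mono R N g i x].
Proof. by rewrite inE. Qed.

Lemma perturb x d i1 : i1 \in argmax g x ->
  exists2 e : R, 0 < e & forall i,
    (i \in argmax g (fun j => x j + e * d j)) =
    (i \in argmax g x) && [forall j in argmax g x, Dv j d <= Dv i d].
Proof.
move=> hi1.
have := @small_eps _ [pred ij : 'I_(tp_k g) * 'I_(tp_k g) |
     (ij.1 \in argmax g x) && (ij.2 \notin argmax g x)]
  (fun ij => Dv ij.2 d - Dv ij.1 d) (fun ij => @mono R N g ij.1 x - @mono R N g ij.2 x).
case.
  move=> [i j] /andP [/= hi hj]; rewrite subr_gt0.
  move: hj; rewrite argmaxE negb_forall => /existsP [l]; rewrite -ltNge => hl.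
  by apply: (lt_le_trans hl); move: hi; rewrite argmaxE => /forallP.
move=> e e0 he; exists e => // i.
rewrite argmaxE; apply/forallP/andP.
  move=> H.
  have hi : i \in argmax g x.
    apply/negPn/negP => hni.
    have := he (i1, i); rewrite /= hi1 hni => /(_ isT).
    have := H i1; rewrite !mono_shift; lra.
  split => //; apply/forall_inP => j hj.
  have ej : @mono R N g j x = @mono R N g i x.
    apply/eqP; rewrite eq_le.
    move: hi hj; rewrite !argmaxE => /forallP h1 /forallP h2.
    by rewrite h1 h2.
  have := H j; rewrite !mono_shift ej lerD2l ler_pM2l //.
case=> hi /forall_inP hD j.
rewrite !mono_shift.
case hj : (j \in argmax g x).
  have ej : @mono R N g j x = @mono R N g i x.
    apply/eqP; rewrite eq_le.
    move: (hi) (hj); rewrite !argmaxE => /forallP h1 /forallP h2.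
    by rewrite h1 h2.
  by rewrite ej lerD2l ler_pM2l // hD.
have := he (i, j); rewrite /= hi hj => /(_ isT) h; lra.
Qed.

Lemma tangent_face x v i1 : i1 \in argmax g x ->
  {in argmax g x &, forall i i', Dv i v = Dv i' v} ->
  in_tangent (@face R N g (argmax g x)) v.
Proof.
move=> hi1 hD; have [e e0 he] := @perturb x v i1 hi1.
exists 1%N, (fun _ => e^-1), (fun _ => fun j => x j + e * v j), (fun _ => x).
split.
  move=> _; split; last exact: subxx.
  apply/subsetP => i hi; rewrite he hi /=; apply/forall_inP => j hj.
  by rewrite (hD j i hj hi).
apply: functional_extensionality => j; rewrite big_ord1.
rewrite addrC addKr mulrA mulVf ?mul1r //; lra.
Qed.

End Geo.


Lemma dim_bound (R : realType) (N k d : nat) (M : 'M[R]_(k, N)) (P : rvec R N -> Prop) :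
  has_dim P d ->
  (forall v : rvec R N, (forall a, \sum_j M a j * v j = 0) -> in_tangent P v) ->
  (N <= d + k)%N.
Proof.
move=> [_ hd] hT; rewrite leqNgt; apply/negP => hlt.
set K := kermx M^T.
have hrk : (d.+1 <= \rank K)%N.
  rewrite /K mxrank_ker mxrank_tr.
  have := rank_leq_row M; move: hlt; clear; lia.
set B := row_base K.
pose v : 'I_d.+1 -> rvec R N := fun i j => B (widen_ord hrk i) j.
apply: (hd v).
  move=> i; apply: hT => a.
  have hsub : (row (widen_ord hrk i) B <= K)%MS.
    apply: submx_trans (row_sub _ _) _; rewrite /B eq_row_base; exact: submx_refl.
  move/sub_kermxP: hsub => /matrixP /(_ 0 a); rewrite [LHS]mxE [RHS]mxE => h.
  rewrite -[RHS]h; apply: eq_bigr => j _.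
  by rewrite [M^T _ _]mxE [row _ _ _ _]mxE mulrC.
move=> c hc.
pose cr : 'rV[R]_(\rank K) := \row_r \sum_i (widen_ord hrk i == r)%:R * c i.
have cr0 : cr = 0.
  apply: (row_free_inj (row_base_free K)); rewrite mul0mx.
  apply/matrixP => z j; rewrite [RHS]mxE -[RHS](hc j) [LHS]mxE.
  under eq_bigr => r _ do rewrite [cr _ _]mxE mulr_suml.
  rewrite exchange_big /=; apply: eq_bigr => i _.
  rewrite (bigD1 (widen_ord hrk i)) //= eqxx mul1r big1 ?addr0 //.
  by move=> r hr; rewrite eq_sym (negbTE hr) !mul0r.
move=> i; move/matrixP: cr0 => /(_ 0 (widen_ord hrk i)); rewrite [LHS]mxE [RHS]mxE => h.
rewrite -[RHS]h.
rewrite (bigD1 i) //= eqxx mul1r big1 ?addr0 // => i' hi'.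
have -> : (widen_ord hrk i' == widen_ord hrk i) = false.
  by apply/negbTE; apply: contra hi' => /eqP [] e; apply/eqP/val_inj.
by rewrite mul0r.
Qed.


Lemma sum_deltaR (Rg : pzRingType) (n l : nat) (F : nat -> Rg) : (l < n)%N ->
  \sum_(i < n) F i * (l == i :> nat)%:R = F l.
Proof.
move=> hl; rewrite (bigD1 (Ordinal hl)) //= eqxx mulr1 big1 ?addr0 //.
move=> i hi; rewrite (_ : (l == i :> nat) = false) ?mulr0 //.
by apply/negbTE; apply: contra hi => /eqP e; apply/eqP/val_inj.
Qed.

Theorem lemma3p7 (R : realType) (n : nat)
    (Sig : {fset {fset ivec n.+1}}) (f : trop_poly R n.+1) :
  unimodular_fan R Sig ->
  is_trop_poly f ->
  (* X is non-singular *)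
  (forall rho, rho \in Sig ->
     exists g : trop_poly R n.+1,
       [/\ trop_poly_on rho g,
           forall x, trop_hyp g x <-> closure_in_stratum f rho x &
           primitive_triangulation rho g]) ->
  forall rho, rho \in Sig ->
  forall g : trop_poly R n.+1,
    trop_poly_on rho g ->
    (forall x, trop_hyp g x <-> closure_in_stratum f rho x) ->
    primitive_triangulation rho g ->
  forall sigma : rvec R n.+1 -> Prop, is_face g sigma ->
  forall q : nat, has_dim sigma (q + #|` rho|) ->
  forall p : nat, (p + q + #|` rho| <= n)%N ->
    N_vanishes rho g sigma p.
Proof.
move=> hfan _ _ rho hrho g _ _ hprim sigma [x0 [hcard ->]] q hdim p hp.
set S := argmax g x0.
have [i0 hi0] : exists i0, i0 \in S.
  by apply/set0Pn; rewrite -card_gt0; apply: ltnW.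
set L := enum (S :\ i0).
set k := size L.
pose z0 := ([ffun=> 0] : ivec n.+1).
pose iS (c : nat) := nth i0 L c.
set E := [seq [ffun j => tp_e i j - tp_e i0 j] | i <- L].
have szE : size E = k by rewrite size_map.
have hE : forall c, (c < k)%N -> nth z0 E c = [ffun j => tp_e (iS c) j - tp_e i0 j].
  by move=> c hc; rewrite (nth_map i0).
have [B' hB'] := hprim x0 i0 hi0.
have [_ _ hpart _] := hfan.
have [B'' hB''] := hpart rho hrho.
have [w hw] := dual_vectors hB'' hB'.
rewrite szE in hw.
have hiS : forall c, (c < k)%N -> iS c \in S :\ i0.
  by move=> c hc; rewrite -mem_enum; apply: mem_nth.
have hSc : forall i, i \in S -> i = i0 \/ exists2 c, (c < k)%N & i = iS c.
  move=> i hi; case: (i =P i0) => [-> | hne]; [by left | right].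
  have hiL : i \in L by rewrite mem_enum in_setD1 hi andbT; apply/eqP.
  by exists (index i L); [rewrite index_mem | rewrite /iS nth_index].
have hdiff : forall c (v : rvec R n.+1), (c < k)%N ->
    Dv (iS c) v = Dv i0 v + \sum_j ((nth z0 E c) j)%:~R * v j.
  move=> c v hc; rewrite hE // /Dv -big_split /=; apply: eq_bigr => j _.
  by rewrite ffunE intrB; lra.
have hk : (p < k)%N.
  pose M : 'M[R]_(k, n.+1) := \matrix_(a, j) ((nth z0 E a) j)%:~R.
  have := dim_bound (M := M) hdim.
  have H : forall v : rvec R n.+1, (forall a, \sum_j M a j * v j = 0) ->
      in_tangent (face S) v.
    move=> v hv; apply: (tangent_face hi0).
    have h0 : forall i, i \in S -> Dv i v = Dv i0 v.
      move=> i hi; case: (hSc i hi) => [-> // | [c hc ->]].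
      rewrite hdiff // -[RHS]addr0; congr (_ + _).
      transitivity (\sum_j M (Ordinal hc) j * v j); last exact: hv.
      by apply: eq_bigr => j _; rewrite mxE.
    by move=> i i' hi hi'; rewrite h0 // h0.
  move=> /(_ H); move: hp; clear; lia.
move=> I hI.
pose It (t : 'I_p) := nth ord0 (enum I) t.
pose z (j : 'I_n.+1) : ivec n.+1 :=
  [ffun j' => (j == j')%:Z - \sum_(b < k) (nth z0 E b j) * w b j'].
pose W (u : 'I_(k + n.+1)) : ivec n.+1 :=
  match split u with inl b => w b | inr j => z j end.
pose A (t : 'I_p) (u : 'I_(k + n.+1)) : int :=
  match split u with inl b => nth z0 E b (It t) | inr j => (It t == j)%:Z end.
have hWl : forall b, W (lshift n.+1 b) = w b.
  by move=> b; rewrite /W -[lshift n.+1 b]/(unsplit (inl b)) unsplitK.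
have hWr : forall j, W (rshift k j) = z j.
  by move=> j; rewrite /W -[rshift k j]/(unsplit (inr j)) unsplitK.
have hAl : forall t b, A t (lshift n.+1 b) = nth z0 E b (It t).
  by move=> t b; rewrite /A -[lshift n.+1 b]/(unsplit (inl b)) unsplitK.
have hAr : forall t j, A t (rshift k j) = (It t == j)%:Z.
  by move=> t j; rewrite /A -[rshift k j]/(unsplit (inr j)) unsplitK.
have hev : forall t, [ffun j => \sum_u A t u * W u j] = [ffun j' => (It t == j')%:Z].
  move=> t; apply/ffunP => j'; rewrite !ffunE big_split_ord /=.
  under eq_bigr => b _ do rewrite hAl hWl.
  under [X in _ + X = _]eq_bigr => j _ do rewrite hAr hWr.
  have -> : \sum_(j < n.+1) (It t == j)%:Z * z j j' = z (It t) j'.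
    rewrite (bigD1 (It t)) //= eqxx mul1r big1 ?addr0 // => j hj.
    by rewrite eq_sym (negbTE hj) mul0r.
  by rewrite ffunE addrC subrK.
have -> : basis_wedge I =
    (fun J => \sum_(F : {ffun 'I_p -> 'I_(k + n.+1)})
                (\prod_t A t (F t)) * wedge (fun t => W (F t)) J).
  apply: functional_extensionality => J.
  rewrite (basis_wedge_evec hI) -wedge_expand; congr (wedge _ _).
  by apply: functional_extensionality => t; rewrite hev.
apply: span_sum => F.
exists (fun t => W (F t)); split => //; left.
have [a ha] : exists a : 'I_k, forall t, F t != lshift n.+1 a.
  case: (boolP [exists a : 'I_k, [forall t, F t != lshift n.+1 a]]) =>
    [/existsP [a /forallP ha] | /existsPn H]; first by exists a.
  exfalso.
  have sub : [set lshift n.+1 a | a : 'I_k] \subset [set F t | t : 'I_p].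
    apply/subsetP => u /imsetP [a _ ->].
    move: (H a); rewrite negb_forall => /existsP [t]; rewrite negbK => /eqP <-.
    exact: imset_f.
  have := subset_leq_card sub; rewrite card_imset; last exact: lshift_inj.
  rewrite card_ord => h.
  have := leq_trans h (leq_imset_card _ _); rewrite card_ord.
  by move: hk; clear; lia.
have hWa : forall u, u != lshift n.+1 a -> idot (nth z0 E a) (W u) = 0.
  move=> u; rewrite -[u]splitK; case: (split u) => [b|j] /= hu.
    rewrite hWl hw //; move: hu; case: (a =P b :> nat) => // e.
    by rewrite (_ : b = a) ?eqxx //; apply: val_inj.
  rewrite hWr /idot.
  under eq_bigr => j' _ do rewrite ffunE mulrBr mulr_sumr.
  rewrite sumrB exchange_big /=.
  rewrite (bigD1 j) //= eqxx mulr1 big1 ?addr0; last first.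
    by move=> j' hj'; rewrite eq_sym (negbTE hj') mulr0.
  have -> : \sum_(b < k) \sum_(i < n.+1) nth z0 E a i * (nth z0 E b j * w b i)
      = \sum_(b < k) nth z0 E b j * (a == b :> nat)%:R.
    apply: eq_bigr => b _; rewrite natz -(hw a b) ?ltn_ord // /idot mulr_sumr.
    by apply: eq_bigr => i _; rewrite mulrCA.
  by rewrite (sum_deltaR (fun b => nth z0 E b j)) // subrr.
pose d : rvec R n.+1 := fun j => \sum_(b < k) (- (b != a :> nat)%:R) * ((w b j)%:~R : R).
have hdd : forall c, (c < k)%N ->
    \sum_j ((nth z0 E c) j)%:~R * d j = - (c != a :> nat)%:R :> R.
  move=> c hc.
  transitivity (\sum_(b < k) (- (b != a :> nat)%:R) * ((idot (nth z0 E c) (w b))%:~R : R)).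
    rewrite /d; under eq_bigr => j _ do rewrite mulr_sumr.
    rewrite exchange_big; apply: eq_bigr => b _ /=.
    rewrite /idot rmorph_sum mulr_sumr; apply: eq_bigr => j _.
    by rewrite rmorphM /= mulrCA.
  under eq_bigr => b _ do rewrite hw ?ltn_ord // -pmulrn.
  by rewrite (sum_deltaR (fun b => - (b != a :> nat)%:R)).
have [e e0 he] := perturb d hi0.
set y := (fun j => x0 j + e * d j) in he.
have hDd : forall c, (c < k)%N -> Dv (iS c) d = Dv i0 d - (c != a :> nat)%:R.
  by move=> c hc; rewrite hdiff // hdd.
have hle : forall j, j \in S -> Dv j d <= Dv i0 d.
  move=> j hj; case: (hSc j hj) => [-> // | [c hc ->]].
  by rewrite hDd // lerBlDr lerDl ler0n.
have hy : forall i, i \in argmax g y -> i = i0 \/ i = iS a.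
  move=> i; rewrite he => /andP [hi /forall_inP hmax].
  case: (hSc i hi) => [-> | [c hc ei]]; [by left | right].
  rewrite ei in hmax *.
  have := hmax i0 hi0; rewrite hDd //.
  case: (c =P a :> nat) => [-> // | /eqP/negbTE hne].
  by rewrite /= mulr1n lerBrDr gerDl ler10.
have hiSa : iS a \in S by move: (hiS a (ltn_ord a)); rewrite in_setD1 => /andP [].
have hneq : iS a != i0 by move: (hiS a (ltn_ord a)); rewrite in_setD1 => /andP [].
have hy0 : i0 \in argmax g y.
  by rewrite he hi0 /=; apply/forall_inP => j hj; apply: hle.
have hya : iS a \in argmax g y.
  rewrite he hiSa /=; apply/forall_inP => j hj.
  by rewrite hDd ?ltn_ord // eqxx subr0; apply: hle.
exists (face (argmax g y)); split; [| split].
- exists y; split => //; apply/card_gt1P; exists i0, (iS a); split => //.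
  by rewrite eq_sym.
- move=> x hx; apply/subsetP => i hi; apply: (subsetP hx).
  by move: hi; rewrite he => /andP [].
- move=> t; rewrite /tangent_int; apply: (tangent_face hy0).
  have hv : forall i, i \in argmax g y ->
      Dv i (fun j => ((W (F t)) j)%:~R) = Dv i0 (fun j => ((W (F t)) j)%:~R).
    move=> i /hy [-> // | ->]; rewrite hdiff ?ltn_ord // -[RHS]addr0; congr (_ + _).
    transitivity ((idot (nth z0 E a) (W (F t)))%:~R : R); last by rewrite hWa.
    by rewrite /idot rmorph_sum; apply: eq_bigr => j _; rewrite rmorphM.
  by move=> i i' hi hi'; rewrite hv // hv.
Qed.
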